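(* Let $Y$ be a $\mathbb{Q}$-vector space, let $f:\mathbb{R}\to Y$, let $s\ge 1$, and let $I_k=(a_k,b_k)$, $k=1,\dots,s$, be nonempty open intervals of $\mathbb{R}$. If $\Delta_{h_1h_2\cdots h_s}f(x)=0$ for all $x\in\mathbb{R}$ and all $h_k\in I_k$, $k=1,\dots,s$, then $\Delta_{h_1h_2\cdots h_s}f(x)=0$ for all $(x,h_1,\dots,h_s)\in\mathbb{R}^{s+1}$.
   Context: For $f:X\to Y$ between $\mathbb{Q}$-vector spaces and $h\in X$, $\Delta_hf(x)=f(x+h)-f(x)$, and iterated differences are defined recursively by $\Delta_{h_1h_2\cdots h_s}f(x)=\Delta_{h_1}\left(\Delta_{h_2\cdots h_s}f\right)(x)$ for $s\ge 2$. *)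

(* Defs.v *)
From HB Require Import structures.
From mathcomp Require Import all_boot all_order all_algebra.
From Stdlib Require Import Reals.
Set Implicit Arguments. Unset Strict Implicit. Unset Printing Implicit Defensive.
Import GRing.Theory.

(* Real numbers: Stdlib reals (only their additive structure is used).
   Y: a Q-vector space = MathComp lmodType over rat. *)
Definition Rr := Rdefinitions.R.

Definition delta (Y : lmodType rat) (h : Rr) (f : Rr -> Y) : Rr -> Y :=
  fun x => @GRing.add Y (f (Rdefinitions.Rplus x h)) (@GRing.opp Y (f x)).

Fixpoint deltas (Y : lmodType rat) (hs : seq Rr) (f : Rr -> Y) : Rr -> Y :=
  match hs with
  | [::] => f
  | h :: hs' => delta h (deltas hs' f)
  end.

(* Main.v *)
Require Import Defs.
From HB Require Import structures.
From mathcomp Require Import all_boot all_order all_algebra.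
From Stdlib Require Import Reals.
From Stdlib Require Import Lra Lia.
From Stdlib Require Znat.
Import GRing.Theory.

Section S.
Variable Y : lmodType rat.
Local Open Scope ring_scope.

Lemma deltas_ext (pre : seq Rr) (g1 g2 : Rr -> Y) :
  (forall x, g1 x = g2 x) -> forall x, deltas pre g1 x = deltas pre g2 x.
Proof.
elim: pre => [|h pre IH] H x /=; first exact: H.
by rewrite /delta !IH.
Qed.

Lemma deltas_add (pre : seq Rr) (g1 g2 : Rr -> Y) x :
  deltas pre (fun y => g1 y + g2 y) x = deltas pre g1 x + deltas pre g2 x.
Proof.
elim: pre x => [|h pre IH] x //=.
by rewrite /delta !IH opprD addrACA.
Qed.

Lemma deltas_opp (pre : seq Rr) (g : Rr -> Y) x :
  deltas pre (fun y => - g y) x = - deltas pre g x.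
Proof.
elim: pre x => [|h pre IH] x //=.
by rewrite /delta !IH opprD.
Qed.

Lemma deltas_shift (pre : seq Rr) (g : Rr -> Y) c x :
  deltas pre (fun y => g (Rplus y c)) x = deltas pre g (Rplus x c).
Proof.
elim: pre x => [|h pre IH] x //=.
rewrite /delta !IH.
by have -> : Rplus (Rplus x c) h = Rplus (Rplus x h) c by lra.
Qed.

Lemma deltas_zero (pre : seq Rr) x : deltas pre (fun _ => (0 : Y)) x = 0.
Proof.
elim: pre x => [|h pre IH] x //=.
by rewrite /delta !IH subrr.
Qed.

Definition Zp (pre : seq Rr) (G : Rr -> Y) d := forall x, deltas pre (delta d G) x = 0.

Lemma Z_add pre G d1 d2 : Zp pre G d1 -> Zp pre G d2 -> Zp pre G (Rplus d1 d2).
Proof.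
move=> H1 H2 x.
rewrite (@deltas_ext pre _ (fun y => delta d1 G (Rplus y d2) + delta d2 G y)).
  by rewrite deltas_add deltas_shift H1 H2 addr0.
move=> y; rewrite /delta.
have -> : Rplus y (Rplus d1 d2) = Rplus (Rplus y d2) d1 by lra.
by rewrite addrA subrK.
Qed.

Lemma Z_opp pre G d : Zp pre G d -> Zp pre G (Ropp d).
Proof.
move=> H x.
rewrite (@deltas_ext pre _ (fun y => - delta d G (Rplus y (Ropp d)))).
  by rewrite deltas_opp deltas_shift H oppr0.
move=> y; rewrite /delta.
have -> : Rplus (Rplus y (Ropp d)) d = y by lra.
by rewrite opprB.
Qed.

Lemma Z_nat pre G t : Zp pre G t -> forall n, Zp pre G (Rmult (INR n) t).
Proof.
move=> H; elim=> [|n IH].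
  have -> : Rmult (INR 0) t = Rplus t (Ropp t) by simpl; lra.
  by apply: Z_add => //; apply: Z_opp.
have -> : Rmult (INR n.+1) t = Rplus (Rmult (INR n) t) t by rewrite S_INR; lra.
exact: Z_add.
Qed.

Lemma onevar (pre : seq Rr) (G : Rr -> Y) (a b : Rr) : Rlt a b ->
  (forall d, Rlt a d -> Rlt d b -> Zp pre G d) -> forall d, Zp pre G d.
Proof.
move=> hab H.
have small : forall t, Rlt 0 t -> Rlt t (Rminus b a) -> Zp pre G t.
  move=> t ht1 ht2.
  pose k := Rdiv (Rminus (Rplus a b) t) 2.
  have -> : t = Rplus (Rplus k t) (Ropp k) by lra.
  apply: Z_add; first by apply: H; rewrite /k; lra.
  by apply: Z_opp; apply: H; rewrite /k; lra.
have pos : forall d, Rlt 0 d -> Zp pre G d.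
  move=> d hd.
  have [HN1 HN2] := archimed (Rdiv d (Rminus b a)).
  set N := up _ in HN1 HN2.
  have hN : (0 < N)%Z.
    apply: lt_IZR; have : Rlt 0 (Rdiv d (Rminus b a)).
      apply: Rdiv_lt_0_compat; lra.
    lra.
  set n := Z.to_nat N.
  have hn : INR n = IZR N by rewrite /n INR_IZR_INZ Znat.Z2Nat.id //; lia.
  have hnpos : Rlt 0 (INR n) by rewrite hn; apply: IZR_lt.
  have -> : d = Rmult (INR n) (Rdiv d (INR n)) by field; lra.
  apply: Z_nat; apply: small.
    apply: Rdiv_lt_0_compat; lra.
  have h1 : Rlt d (Rmult (Rminus b a) (INR n)).
    rewrite hn. have := HN1. rewrite /Rdiv => HH.
    have hba : Rlt 0 (Rminus b a) by lra.
    apply (Rmult_lt_compat_l (Rminus b a)) in HH => //.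
    move: HH; rewrite -Rmult_assoc (Rmult_comm (Rminus b a) d) Rmult_assoc Rinv_r; lra.
  apply (Rmult_lt_reg_r (INR n)) => //.
  rewrite /Rdiv Rmult_assoc Rinv_l; lra.
move=> d.
case: (Rtotal_order d 0) => [hd|[hd|hd]].
- have -> : d = Ropp (Ropp d) by lra.
  apply: Z_opp; apply: pos; lra.
- rewrite hd; have -> : (0 = Rplus 1 (Ropp 1))%R by lra.
  apply: Z_add; first by apply: pos; lra.
  by apply: Z_opp; apply: pos; lra.
- exact: pos.
Qed.


Lemma deltas_cat (p q : seq Rr) (g : Rr -> Y) :
  deltas (p ++ q) g = deltas p (deltas q g).
Proof. by elim: p => //= h p ->. Qed.

Lemma gen (s : nat) (f : Rr -> Y) (a b : 'I_s -> Rr)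
  (hab : forall k, Rlt (a k) (b k)) (ks : seq 'I_s) : uniq ks ->
  forall pre : seq Rr,
  (forall h : 'I_s -> Rr, (forall k, k \in ks -> Rlt (a k) (h k) /\ Rlt (h k) (b k)) ->
     forall x, deltas pre (deltas (map h ks) f) x = 0) ->
  forall h x, deltas pre (deltas (map h ks) f) x = 0.
Proof.
elim: ks => [|k ks IH] /=.
  move=> _ pre H h x; apply: (H h) => k; by rewrite in_nil.
move=> /andP [kn uks] pre H.
have H1 : forall d, Rlt (a k) d -> Rlt d (b k) ->
    forall h x, deltas (pre ++ [:: d]) (deltas (map h ks) f) x = 0.
  move=> d hd1 hd2; apply: IH => // h Hh x.
  rewrite deltas_cat /=.
  pose h' := fun j => if j == k then d else h j.
  have -> : map h ks = map h' ks.
    apply/eq_in_map => j jin; rewrite /h'; case: eqP => // ejk.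
    by rewrite -ejk jin in kn.
  have := H h' _ x; rewrite /= /h' eqxx; apply.
  move=> j; rewrite in_cons; case: eqP => [->|nj] /=; first by [].
  exact: Hh.
move=> h x.
have := @onevar pre (deltas (map h ks) f) (a k) (b k) (hab k).
move=> O; apply: O => d hd1 hd2 y.
by have := H1 d hd1 hd2 h y; rewrite deltas_cat.
Qed.

End S.

Theorem theorem2 (Y : lmodType rat) (f : Rr -> Y) (s : nat) (hs : (1 <= s)%N)
  (a b : 'I_s -> Rr) (hab : forall k, Rdefinitions.Rlt (a k) (b k))
  (hyp : forall (x : Rr) (h : 'I_s -> Rr),
     (forall k, Rdefinitions.Rlt (a k) (h k) /\ Rdefinitions.Rlt (h k) (b k)) ->
     deltas [seq h k | k <- enum 'I_s] f x = (GRing.zero : Y)) :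
  forall (x : Rr) (h : 'I_s -> Rr), deltas [seq h k | k <- enum 'I_s] f x = (GRing.zero : Y).
Proof.
move=> x h.
have := @gen Y s f a b hab (enum 'I_s) (enum_uniq _) [::].
move=> G; apply: G => h' Hh y /=; apply: hyp => k; apply: Hh.
by rewrite mem_enum.
Qed.
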